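(* Let $\lambda=(a,b)$ with $a\ge b\ge1$, and let $\mu=(\mu_1,\dots,\mu_M)$ be a content with $\sum_i\mu_i=a+b$ such that $\mu_i=2$ for exactly $m$ indices $i$ and $\mu_i=1$ for the remaining indices (so $M=a+b-m$). Then for every $k\ge0$, $$|S_k(\lambda,\mu)|=\frac{a-b+1+2k}{a+1+k-m}\binom{a+b-2m}{b-k-m}$$ (interpreted as $0$ when $b-k-m<0$).
   Context: The shape $(a,b)$ has $a$ left-justified boxes in row 1 and $b$ in row 2. A filling of shape $\lambda$ and content $\mu$ assigns positive integers to boxes so that value $v$ occurs exactly $\mu_v$ times; row-standard means strictly increasing along rows from left to right. Inversion pairs of a row-standard $\tau$: for a box $c$ and $r\ge1$ let $c^{(r)}$ be the box $r$ positions to its right, if it exists. For distinct boxes $c,c'$ in the same column with $\tau(c)<\tau(c')$, let $r\ge1$ be least such that one of $c^{(r)},c'^{(r)}$ does not exist or both exist with $\tau(c^{(r)})\ne\tau(c'^{(r)})$. $(c,c')$ is an inversion pair if either (one does not exist and $c$ lies below $c'$) or (both exist and $\tau(c^{(r)})>\tau(c'^{(r)})$). $S_k(\lambda,\mu)$: row-standard fillings of shape $\lambda$ and content $\mu$ with exactly $k$ inversion pairs (counted as pairs of boxes, with multiplicity). *)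

(* Defs.v *)
From HB Require Import structures.
From mathcomp Require Import all_boot all_order all_algebra.
Set Implicit Arguments. Unset Strict Implicit. Unset Printing Implicit Defensive.

(* A filling of the two-row shape (a,b) is a pair (r1, r2) of sequences:
   r1 = entries of row 1 (top row, a boxes) from left to right,
   r2 = entries of row 2 (bottom row, b boxes) from left to right.
   The box (row i, column j) has its right neighbour at distance r in
   column j + r, which exists iff j + r < length of row i. *)

Definition has_content (mu : seq nat) (r1 r2 : seq nat) : bool :=
  all (fun v => count_mem v (r1 ++ r2) == nth 0 mu v.-1) (iota 1 (size mu)) &&
  all (fun v => 1 <= v <= size mu) (r1 ++ r2).

Definition row_standard (r1 r2 : seq nat) : bool :=
  sorted ltn r1 && sorted ltn r2.

Definition is_filling (a b : nat) (mu : seq nat) (r1 r2 : seq nat) : bool :=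
  [&& size r1 == a, size r2 == b & has_content mu r1 r2].

(* Given the entries strictly to the right of c (sc) and of c' (sc'),
   scan r = 1, 2, ...; c_below tells whether c lies below c'. *)
Fixpoint inv_tail (sc sc' : seq nat) (c_below : bool) : bool :=
  match sc, sc' with
  | [::], _ => c_below
  | _, [::] => c_below
  | u :: sc1, v :: sc1' => if u == v then inv_tail sc1 sc1' c_below else v < u
  end.

(* Is the pair of boxes in column j (both rows) an inversion pair?
   (c, c') must satisfy tau(c) < tau(c'); with two rows the only candidate
   ordered pair in column j < b is determined by which entry is smaller. *)
Definition inv_col (r1 r2 : seq nat) (j : nat) : bool :=
  let x := nth 0 r1 j in
  let y := nth 0 r2 j in
  if x < y then inv_tail (drop j.+1 r1) (drop j.+1 r2) false
  else if y < x then inv_tail (drop j.+1 r2) (drop j.+1 r1) true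
  else false.

Definition num_inv (r1 r2 : seq nat) : nat :=
  count (inv_col r1 r2) (iota 0 (minn (size r1) (size r2))).

Definition in_S (k a b : nat) (mu : seq nat) (r1 r2 : seq nat) : bool :=
  [&& is_filling a b mu r1 r2, row_standard r1 r2 & num_inv r1 r2 == k].

(* All fillings with content mu have entries in 1..size mu, so they are
   enumerated by tuples of ordinals 'I_(size mu).+1. *)
Definition S_card (k a b : nat) (mu : seq nat) : nat :=
  #|[set t : (a.-tuple 'I_(size mu).+1) * (b.-tuple 'I_(size mu).+1) |
      in_S k a b mu (map val t.1) (map val t.2)]|.

(* Main.v *)
Require Import Defs.
From HB Require Import structures.
From mathcomp Require Import all_boot all_order all_algebra.
From mathcomp Require Import zify ring.
Set Implicit Arguments. Unset Strict Implicit. Unset Printing Implicit Defensive.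


Fixpoint nsg (e : bool) (s : seq (nat * nat)) : bool :=
  match s with [::] => e | q :: s' => if q.1 == q.2 then nsg e s' else q.1 < q.2 end.
Definition colv e (p : nat * nat) s : bool := (p.1 != p.2) && (nsg e s != (p.1 < p.2)).
Fixpoint Fi (e : bool) (s : seq (nat * nat)) : nat :=
  match s with [::] => 0 | p :: s' => colv e p s' + Fi e s' end.

Definition swp (p : nat * nat) := (p.2, p.1).

Lemma zip_swap (u v : seq nat) : zip v u = map swp (zip u v).
Proof. by elim: u v => [|x u IH] [|y v] //=; rewrite IH. Qed.

Lemma nsg_swap e s : nsg e (map swp s) = ~~ nsg (~~ e) s.
Proof.
elim: s => [|[x y] s IH] /=; first by rewrite negbK.
rewrite eq_sym; case: eqP => [//|/eqP ne].
by rewrite ltnNge leq_eqVlt (negbTE ne).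
Qed.

Lemma inv_tailE u v c : inv_tail u v c = nsg c (zip v u).
Proof.
elim: u v => [|x u IH] [|y v] //=; rewrite IH eq_sym; by case: eqP.
Qed.

Lemma num_invE r1 r2 : num_inv r1 r2 = Fi true (zip r1 r2).
Proof.
elim: r1 r2 => [|x r1 IH] r2.
  by case: r2.
case: r2 => [|y r2]; first by rewrite /num_inv /=.
rewrite /num_inv /= minnSS /= -IH /num_inv (iotaDl 1 0) count_map.
rewrite /inv_col /= !inv_tailE /colv /=.
congr (_ + _).
rewrite !drop0 zip_swap nsg_swap /=.
by case: (ltngtP x y) => [lt|lt|eq] //=; case: (nsg _ _).
Qed.

Lemma nsg_rcons e s p :
  nsg e (rcons s p) = nsg (if p.1 == p.2 then e else p.1 < p.2) s.
Proof. by elim: s => [|q s IH] //=; rewrite IH. Qed.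

Lemma Fi_rcons e s p :
  Fi e (rcons s p) = Fi (if p.1 == p.2 then e else p.1 < p.2) s +
     ((p.1 != p.2) && (e != (p.1 < p.2))).
Proof.
elim: s => [|q s IH] /=; first by rewrite /colv /= addn0.
by rewrite IH /colv nsg_rcons addnA.
Qed.

Lemma Fi_swap e s : Fi e (map swp s) = Fi (~~ e) s.
Proof.
elim: s => [|[x y] s IH] //=; rewrite IH /colv /= nsg_swap eq_sym.
case: eqP => //= /eqP ne; congr (_ + _).
rewrite ltnNge leq_eqVlt eq_sym (negbTE ne) /=.
by case: (nsg _ _); case: (x < y).
Qed.


Definition stepall (M x : nat) (s : seq (seq nat * seq nat)) :=
  if x == 2 then [seq (rcons p.1 M, rcons p.2 M) | p <- s]
  else [seq (rcons p.1 M, p.2) | p <- s] ++ [seq (p.1, rcons p.2 M) | p <- s].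

Fixpoint fillsr (r : seq nat) : seq (seq nat * seq nat) :=
  match r with
  | [::] => [:: ([::], [::])]
  | x :: r' => stepall (size r').+1 x (fillsr r')
  end.

Definition fills mu := fillsr (rev mu).

Lemma fills_rcons mu x : fills (rcons mu x) = stepall (size mu).+1 x (fills mu).
Proof. by rewrite /fills rev_rcons /= size_rev. Qed.

Lemma fills_nil : fills [::] = [:: ([::], [::])].
Proof. by []. Qed.

Lemma mem_stepall M x s p : p \in stepall M x s ->
  exists2 q, q \in s &
   (if x == 2 then p = (rcons q.1 M, rcons q.2 M)
    else p = (rcons q.1 M, q.2) \/ p = (q.1, rcons q.2 M)).
Proof.
rewrite /stepall; case: eqP => _.
  by case/mapP => q qs ->; exists q.
rewrite mem_cat => /orP[] /mapP [q qs ->]; exists q => //; by [left|right].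
Qed.

Lemma count_rcons (T : eqType) (P : pred T) s x :
  count P (rcons s x) = count P s + P x.
Proof. by rewrite -cats1 count_cat /= addn0. Qed.

Lemma fills_inv mu p : p \in fills mu ->
  [/\ all (fun v => v <= size mu) p.1, all (fun v => v <= size mu) p.2,
      count (pred1 2) mu <= size p.1, count (pred1 2) mu <= size p.2 &
      size p.1 + size p.2 = size mu + count (pred1 2) mu].
Proof.
elim/last_ind: mu p => [|mu x IH] p.
  by rewrite fills_nil inE => /eqP ->.
rewrite fills_rcons => /mem_stepall [[q1 q2] /IH /= [h1 h2 h3 h4 h5]].
have w : forall s, all (fun v => v <= size mu) s ->
   all (fun v => v <= (size mu).+1) s.
  move=> s; apply: sub_all => v /= hv; lia.
have hM : size mu < (size mu).+1 by [].
rewrite count_rcons size_rcons /=.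
case: (x =P 2) => [_|/eqP nx] /=.
  move=> -> /=; rewrite !all_rcons !size_rcons !w // !hM.
  split=> //; lia.
case=> -> /=; rewrite ?all_rcons ?size_rcons ?w // ?hM; split=> //; lia.
Qed.

Definition cnt (mu : seq nat) v := if (0 < v) && (v <= size mu) then nth 0 mu v.-1 else 0.
Definition hasC mu (r1 r2 : seq nat) := forall v, count_mem v (r1 ++ r2) = cnt mu v.

Lemma has_contentP mu r1 r2 : reflect (hasC mu r1 r2) (has_content mu r1 r2).
Proof.
apply: (iffP andP) => [[/allP h1 /allP h2] v | h].
  rewrite /cnt; case: ifP => hv.
    by apply/eqP; apply: h1; rewrite mem_iota; lia.
  apply/count_memPn; apply/negP => /h2; rewrite hv; lia.
split; apply/allP => v.
  by rewrite mem_iota => hv; rewrite h /cnt ifT //; lia.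
move=> hv; apply/negPn/negP => hn.
move/count_memPn: hv; rewrite h /cnt.
by case: ifP => [hh|_]; [move: hn; rewrite hh | ].
Qed.

Lemma cnt_rcons mu x v :
  cnt (rcons mu x) v = if v == (size mu).+1 then x else cnt mu v.
Proof.
rewrite /cnt size_rcons nth_rcons.
case: (v =P (size mu).+1) => [->|ne] /=; first by rewrite ltnn eqxx ltnSn.
case: (ltnP 0 v) => //= hv.
have -> : (v.-1 == size mu) = false by apply/eqP; lia.
have -> : (v.-1 < size mu) = (v <= size mu) by lia.
have -> : (v <= (size mu).+1) = (v <= size mu) by lia.
by case: (v <= size mu).
Qed.

Lemma cnt_out mu v : size mu < v -> cnt mu v = 0.
Proof. by rewrite /cnt => h; case: ifP => //; lia. Qed.

Lemma hasC_bound mu r1 r2 : hasC mu r1 r2 ->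
  all (fun v => v <= size mu) r1 && all (fun v => v <= size mu) r2.
Proof.
move=> h; rewrite -all_cat; apply/allP => v hv.
case: (leqP v (size mu)) => // lt.
by move/count_memPn: hv; rewrite h cnt_out.
Qed.

Lemma sorted_rcons_all t y : sorted ltn (rcons t y) -> all (fun v => v < y) t.
Proof.
elim: t => //= x t IH H.
have := order_path_min ltn_trans H; rewrite all_rcons => /andP [-> _].
by rewrite IH // (path_sorted H).
Qed.

Lemma sorted_rcons_lt t y : sorted ltn t -> all (fun v => v < y) t ->
  sorted ltn (rcons t y).
Proof.
case: t => //= x t; rewrite rcons_path => -> /= /andP [hx h].
case: t h => // z t h.
by apply: (allP h); exact: mem_last.
Qed.

Lemma sorted_rcons_sorted t y : sorted ltn (rcons t y) -> sorted ltn t.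
Proof. by case: t => //= x t; rewrite rcons_path => /andP []. Qed.

Lemma strip s M : sorted ltn s -> all (fun v => v <= M) s ->
  exists t : seq nat, [/\ s = (if M \in s then rcons t M else t),
      all (fun v => v < M) t & sorted ltn t].
Proof.
case: (boolP (M \in s)) => hM.
  case/lastP: s hM => [//|t y] hM hs; rewrite all_rcons => /andP [hy ha].
  have ht := sorted_rcons_all hs.
  have eyM : y = M.
    move: hM; rewrite mem_rcons inE => /orP [/eqP -> //|hMt].
    by move/allP: ht => /(_ _ hMt); lia.
  subst y; exists t; split=> //; exact: sorted_rcons_sorted hs.
move=> hs ha; exists s; split=> //.
apply/allP => v hv; move/allP: ha => /(_ _ hv).
have : v != M by apply: contraNneq hM => <-.
lia.
Qed.

Definition all12 (mu : seq nat) := all (fun x => (x == 1) || (x == 2)) mu.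

Lemma cm_if (q : seq nat) (c : bool) M v :
  count_mem v (if c then rcons q M else q) = count_mem v q + (c && (v == M)).
Proof. by case: c; rewrite ?count_rcons ?addn0 // eq_sym. Qed.

Lemma cm0 (t : seq nat) M : all (fun v => v < M) t -> count_mem M t = 0.
Proof.
move=> h; apply/count_memPn/negP => /(allP h); by rewrite ltnn.
Qed.

Lemma hasC_ext mu x q1 q2 (c1 c2 : bool) : hasC mu q1 q2 -> c1 + c2 = x ->
  hasC (rcons mu x) (if c1 then rcons q1 (size mu).+1 else q1)
                     (if c2 then rcons q2 (size mu).+1 else q2).
Proof.
move=> h hx v; rewrite count_cat !cm_if cnt_rcons.
have := h v; have := h (size mu).+1; rewrite !count_cat (cnt_out (ltnSn _)).
case: (v =P (size mu).+1) => [->|_]; rewrite ?andbT ?andbF; lia.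
Qed.

Lemma all_lt_le (t : seq nat) n : all (fun v => v <= n) t -> all (fun v => v < n.+1) t.
Proof. by apply: sub_all. Qed.

Lemma fillsP mu r1 r2 : all12 mu ->
  ((r1, r2) \in fills mu) <-> [/\ sorted ltn r1, sorted ltn r2 & hasC mu r1 r2].
Proof.
elim/last_ind: mu r1 r2 => [|mu x IH] r1 r2 h12.
  rewrite fills_nil inE; split.
    case/eqP => -> ->; split=> // v; rewrite /cnt nth_nil; by case: ifP.
  case=> _ _ h.
  have c0 : forall v, cnt [::] v = 0 by move=> v; rewrite /cnt nth_nil; case: ifP.
  case: r1 h => [|v r1] h; last by have := h v; rewrite c0 /= eqxx.
  case: r2 h => [|v r2] h; last by have := h v; rewrite c0 /= eqxx.
  by [].
move: h12; rewrite /all12 all_rcons => /andP [hx h12].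
rewrite fills_rcons; split.
  case/mem_stepall => [[q1 q2]] /IH /= [] // s1 s2 hq.
  have /andP [b1 b2] := hasC_bound hq.
  have key : forall c1 c2 : bool, c1 + c2 = x ->
     [/\ sorted ltn (if c1 then rcons q1 (size mu).+1 else q1),
         sorted ltn (if c2 then rcons q2 (size mu).+1 else q2) &
         hasC (rcons mu x) (if c1 then rcons q1 (size mu).+1 else q1)
                     (if c2 then rcons q2 (size mu).+1 else q2)].
    move=> c1 c2 hc; split; last exact: hasC_ext.
      by case: c1 {hc} => //; apply: sorted_rcons_lt => //; apply: all_lt_le.
    by case: c2 {hc} => //; apply: sorted_rcons_lt => //; apply: all_lt_le.
  case: (x =P 2) => [ex|nx].
    by case=> -> ->; have := key true true; rewrite ex; apply.
  have ex : x = 1 by move: hx nx; case: (x =P 1) => // _; case: (x =P 2).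
  case=> [[-> ->]|[-> ->]].
    by have := key true false; rewrite ex; apply.
  by have := key false true; rewrite ex; apply.
case=> s1 s2 h.
have /andP [b1 b2] := hasC_bound h; rewrite size_rcons in b1 b2.
have [t1 [e1 a1 st1]] := strip s1 b1.
have [t2 [e2 a2 st2]] := strip s2 b2.
move: e1 e2; move: ((size mu).+1 \in r1) ((size mu).+1 \in r2) => c1 c2 e1 e2.
have ht : hasC mu t1 t2.
  move=> v; have := h v; rewrite e1 e2 count_cat !cm_if cnt_rcons count_cat.
  case: (v =P (size mu).+1) => [->|_]; last by rewrite !andbF !addn0.
  by rewrite (cnt_out (ltnSn _)) !cm0.
have hc : c1 + c2 = x.
  have := h (size mu).+1; rewrite e1 e2 count_cat !cm_if cnt_rcons eqxx !cm0 //.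
  by rewrite !andbT.
have tin : (t1, t2) \in fills mu by apply/IH.
rewrite e1 e2 /stepall.
have ex : x = 1 \/ x = 2 by move: hx; case: (x =P 1); case: (x =P 2); auto.
case: c1 c2 e1 e2 hc => [] [] e1 e2 hc /=; case: ex => ex; subst x => //=.
- by apply/mapP; exists (t1, t2).
- by rewrite mem_cat; apply/orP; left; apply/mapP; exists (t1, t2).
- by rewrite mem_cat; apply/orP; right; apply/mapP; exists (t1, t2).
Qed.

Lemma fills_uniq mu : uniq (fills mu).
Proof.
elim/last_ind: mu => [|mu x IH] //.
rewrite fills_rcons /stepall; case: ifP => _.
  rewrite map_inj_uniq //.
  move=> [a1 b1] [a2 b2] /= [e1 e2].
  by move/rcons_inj: e1 => [->]; move/rcons_inj: e2 => [->].
have i1 : injective (fun p : seq nat * seq nat => (rcons p.1 (size mu).+1, p.2)).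
  by move=> [a1 b1] [a2 b2] /= [e1 ->]; move/rcons_inj: e1 => [->].
have i2 : injective (fun p : seq nat * seq nat => (p.1, rcons p.2 (size mu).+1)).
  by move=> [a1 b1] [a2 b2] /= [-> e2]; move/rcons_inj: e2 => [->].
rewrite cat_uniq (map_inj_uniq i1) (map_inj_uniq i2) IH /= andbT.
apply/hasPn => p /mapP [[q1 q2] hq ->] /=.
apply/negP => /mapP [[r1 r2] hr [_ e]].
have [_ h2 _ _ _] := fills_inv hr.
move/allP: h2 => /(_ (size mu).+1); rewrite /= -e mem_rcons inE eqxx ltnn.
by move=> /(_ isT).
Qed.

Section P4sec.
Import GRing.Theory Num.Theory.
Local Open Scope ring_scope.


Definition bz (n : nat) (j : int) : int :=
  match j with Posz j => ('C(n, j))%:Z | Negz _ => 0 end.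

Definition Qz (A B k : nat) : int :=
  bz (A + B) (B%:Z - k%:Z) - bz (A + B) (B%:Z - k%:Z - 1).

Lemma bzS n (j : int) : bz n.+1 j = bz n j + bz n (j - 1).
Proof.
case: j => [[|j]|j].
- have -> : (Posz 0 - 1) = Negz 0 by [].
  by rewrite /= !bin0 addr0.
- have -> : (Posz j.+1 - 1) = Posz j by rewrite -addn1 PoszD addrK.
  by rewrite /= binS PoszD addrC.
- have -> : (Negz j - 1) = Negz j.+1 by lia.
  by [].
Qed.

Lemma bzN n (j : int) : j < 0 -> bz n j = 0.
Proof. by case: j. Qed.

Lemma Qz_pascal A1 B1 k : Qz A1 B1.+1 k + Qz A1.+1 B1 k = Qz A1.+1 B1.+1 k.
Proof.
rewrite /Qz.
have -> : (A1 + B1.+1 = (A1 + B1).+1)%N by lia.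
have -> : (A1.+1 + B1.+1 = (A1 + B1).+2)%N by lia.
have -> : (A1.+1 + B1 = (A1 + B1).+1)%N by lia.
set n := (A1 + B1).+1.
set j := (B1%:Z - k%:Z).
have -> : (B1.+1%:Z - k%:Z) = j + 1 by rewrite /j; lia.
rewrite !bzS addrK.
lia.
Qed.

Lemma Qz_B0 A k : Qz A 0 k = (k == 0%N)%:Z.
Proof.
rewrite /Qz addn0; case: k => [|k] /=.
  by rewrite addn0 bin0 subr0.
by rewrite subr0.
Qed.

Lemma Qz_diag A1 k :
  Qz A1.+1 A1 k + (if k is k1.+1 then Qz A1.+1 A1 k1 else 0) = Qz A1.+1 A1.+1 k.
Proof.
rewrite /Qz.
have -> : (A1.+1 + A1 = (A1 + A1).+1)%N by lia.
have -> : (A1.+1 + A1.+1 = (A1 + A1).+2)%N by lia.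
set n := (A1 + A1).+1.
case: k => [|k].
  rewrite addr0 !subr0 !(bzS n).
  have -> : (A1.+1%:Z - 1) = A1%:Z by lia.
  have -> : bz n A1.+1 = bz n A1.
    rewrite /bz /n; have h : (A1.+1 = (A1+A1).+1 - A1)%N by lia.
    by rewrite {1}h bin_sub //; lia.
  lia.
set j := (A1%:Z - k%:Z).
have -> : (A1%:Z - k.+1%:Z) = j - 1 by rewrite /j; lia.
have -> : (A1.+1%:Z - k.+1%:Z) = j by rewrite /j; lia.
rewrite !(bzS n).
lia.
Qed.

End P4sec.

Import GRing.Theory.

Definition Pr a b k e := (fun p : seq nat * seq nat =>
  [&& size p.1 == a, size p.2 == b & Fi e (zip p.1 p.2) == k]).
Definition N mu a b k e := count (Pr a b k e) (fills mu).

Lemma count_swap mu (P : pred (seq nat * seq nat)) :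
  count P (fills mu) = count (fun p => P (p.2, p.1)) (fills mu).
Proof.
elim/last_ind: mu P => [|mu x IH] P; first by rewrite fills_nil.
rewrite fills_rcons /stepall; case: ifP => _.
  rewrite !count_map (IH (preim _ P)); apply: eq_count => [[u v]] //.
rewrite !count_cat !count_map (IH (preim _ P)) (IH (preim (fun p => (p.1, _)) P)).
by rewrite addnC; congr (_ + _); apply: eq_count => [[u v]].
Qed.

Lemma Nsym mu a b k e : N mu a b k e = N mu b a k (~~ e).
Proof.
rewrite /N count_swap; apply: eq_count => [[u v]]; rewrite /Pr /=.
by rewrite zip_swap Fi_swap andbCA.
Qed.

Lemma zip_rcons_ge (u v : seq nat) x : size v <= size u -> zip (rcons u x) v = zip u v.
Proof.
elim: u v => [|y u IH] [|z v] //= h; try (by []); try (exfalso; lia).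
by rewrite IH.
Qed.

Lemma zip_rcons_lt (u v : seq nat) x : size u < size v ->
  zip (rcons u x) v = rcons (zip u v) (x, nth 0 v (size u)).
Proof.
elim: u v => [|y u IH] [|z v] //= h; try (by []); try (exfalso; lia).
  by case: v h.
by rewrite IH.
Qed.

Lemma zip_rcons2_ge (u v : seq nat) y : size u <= size v -> zip u (rcons v y) = zip u v.
Proof.
elim: u v => [|x u IH] [|z v] //= h; try (by []); try (exfalso; lia).
by rewrite IH.
Qed.

Lemma zip_rcons2_lt (u v : seq nat) y : size v < size u ->
  zip u (rcons v y) = rcons (zip u v) (nth 0 u (size v), y).
Proof.
elim: u v => [|x u IH] [|z v] //= h; try (by []); try (exfalso; lia).
  by case: u IH h.
by rewrite IH.
Qed.

Lemma N0 mu a b k e : b < count (pred1 2) mu -> N mu a b k e = 0.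
Proof.
move=> h; rewrite /N (eq_in_count (a2 := pred0)) ?count_pred0 //.
move=> [u v] /fills_inv [_ _ _ h4 _]; rewrite /Pr /=.
by apply/negP => /and3P [_ /eqP hb _]; move: h4; rewrite hb; lia.
Qed.

Lemma nth_bound mu (u v : seq nat) i : (u, v) \in fills mu -> i < size u ->
  nth 0 u i <= size mu.
Proof.
move=> /fills_inv [h1 _ _ _ _] hi; exact: (allP h1 _ (mem_nth 0 hi)).
Qed.
Lemma nth_bound2 mu (u v : seq nat) i : (u, v) \in fills mu -> i < size v ->
  nth 0 v i <= size mu.
Proof.
move=> /fills_inv [_ h1 _ _ _] hi; exact: (allP h1 _ (mem_nth 0 hi)).
Qed.

Lemma cnt_dd mu a1 b1 k : b1 <= a1 ->
  count (fun p => Pr a1.+1 b1.+1 k true (rcons p.1 (size mu).+1, rcons p.2 (size mu).+1))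
    (fills mu) = N mu a1 b1 k true.
Proof.
move=> hab; apply: eq_in_count => [[u v]] hin /=; rewrite /Pr /= !size_rcons !eqSS.
case: (size u =P a1) => //= hu; case: (size v =P b1) => //= hv.
case: (ltngtP b1 a1) => [lt|gt|eq]; [|exfalso; lia|]; last first.
  by rewrite zip_rcons ?hu ?hv // Fi_rcons eqxx /= addn0.
rewrite zip_rcons_ge ?size_rcons ?hu ?hv // zip_rcons2_lt ?hu ?hv // Fi_rcons /=.
have := nth_bound (i:=b1) hin; rewrite hu => /(_ lt) hb.
have -> : (nth 0 u b1 == (size mu).+1) = false by apply/eqP; lia.
have -> : (nth 0 u b1 < (size mu).+1) by lia.
by rewrite addn0.
Qed.

Lemma cnt_g1_lt mu a1 b k : a1 < b ->
  count (fun p => Pr a1.+1 b k true (rcons p.1 (size mu).+1, p.2)) (fills mu) =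
  if k is k1.+1 then N mu a1 b k1 false else 0.
Proof.
move=> hab.
have -> : count (fun p => Pr a1.+1 b k true (rcons p.1 (size mu).+1, p.2)) (fills mu)
   = count (fun p : seq nat * seq nat => [&& size p.1 == a1, size p.2 == b &
              (Fi false (zip p.1 p.2)).+1 == k]) (fills mu).
  apply: eq_in_count => [[u v]] hin /=; rewrite /Pr /= !size_rcons !eqSS.
  case: (size u =P a1) => //= hu; case: (size v =P b) => //= hv.
  rewrite zip_rcons_lt ?hu ?hv // Fi_rcons /=.
  have := nth_bound2 (i:=a1) hin; rewrite hv => /(_ hab) hb.
  have -> : ((size mu).+1 == nth 0 v a1) = false by apply/eqP; lia.
  have -> : ((size mu).+1 < nth 0 v a1) = false by lia.
  by rewrite addn1.
case: k => [|k].
  rewrite (eq_count (a2 := pred0)) ?count_pred0 // => p /=.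
  by rewrite !andbF.
by apply: eq_count => p /=; rewrite eqSS.
Qed.

Lemma cnt_g1_ge mu a1 b k : b <= a1 ->
  count (fun p => Pr a1.+1 b k true (rcons p.1 (size mu).+1, p.2)) (fills mu) =
  N mu a1 b k true.
Proof.
move=> hab; apply: eq_in_count => [[u v]] hin /=; rewrite /Pr /= !size_rcons !eqSS.
case: (size u =P a1) => //= hu; case: (size v =P b) => //= hv.
by rewrite zip_rcons_ge ?hu ?hv.
Qed.

Lemma cnt_g2 mu a b1 k : b1 < a ->
  count (fun p => Pr a b1.+1 k true (p.1, rcons p.2 (size mu).+1)) (fills mu) =
  N mu a b1 k true.
Proof.
move=> hab; apply: eq_in_count => [[u v]] hin /=; rewrite /Pr /= !size_rcons !eqSS.
case: (size u =P a) => //= hu; case: (size v =P b1) => //= hv.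
rewrite zip_rcons2_lt ?hu ?hv // Fi_rcons /=.
have := nth_bound (i:=b1) hin; rewrite hu => /(_ hab) hb.
have -> : (nth 0 u b1 == (size mu).+1) = false by apply/eqP; lia.
have -> : (nth 0 u b1 < (size mu).+1) by lia.
by rewrite addn0.
Qed.

Lemma cnt_g2_0 mu a k :
  count (fun p => Pr a 0 k true (p.1, rcons p.2 (size mu).+1)) (fills mu) = 0.
Proof.
by rewrite (eq_count (a2 := pred0)) ?count_pred0 // => p; rewrite /Pr /= size_rcons andbF.
Qed.

Lemma Nmain mu : all12 mu -> forall a b k, b <= a ->
  a + b = size mu + count (pred1 2) mu -> count (pred1 2) mu <= b ->
  Posz (N mu a b k true) = Qz (a - count (pred1 2) mu) (b - count (pred1 2) mu) k.
Proof.
elim/last_ind: mu => [|mu x IH] h12 a b k hab hs hm.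
  have [-> ->] : a = 0 /\ b = 0 by move: hs => /=; lia.
  rewrite /N fills_nil /= /Pr /= Qz_B0.
  by case: k.
move: h12; rewrite /all12 all_rcons => /andP [hx h12].
move: hs hm; rewrite size_rcons count_rcons /=.
have hms := count_size (pred1 2) mu.
set m := count (pred1 2) mu in hms IH *.
have N0' : forall a b k e, b < m -> N mu a b k e = 0 by move=> *; apply: N0.
clearbody m.
have {}hms : m <= size mu := hms.
rewrite /N fills_rcons /stepall.
have [ex|ex] : x = 2 \/ x = 1 by move: hx; case: (x =P 1); case: (x =P 2); auto.
all: subst x => /= hs hm; rewrite ?addn1 ?addn0 in hs hm *.
1: have {}hs : a + b = (size mu).+1 + m.+1 := hs.
2: have {}hs : a + b = (size mu).+1 + m := hs.
  rewrite count_map.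
  case: a hab hs => [|a1]; first by lia.
  case: b hm => [|b1]; first by lia.
  move=> hm hab hs.
  rewrite (cnt_dd mu k (_ : b1 <= a1)) //.
  rewrite (IH h12) //; try lia.
rewrite count_cat !count_map.
case: a hab hs => [|a1]; first by lia.
move=> hab hs.
case: (leqP b a1) => hba.
  rewrite (cnt_g1_ge mu k hba) PoszD (IH h12) //; try lia.
  case: b hm hab hs hba => [|b1] hm hab hs hba.
    rewrite cnt_g2_0 addr0.
    have -> : m = 0 by lia.
    by rewrite !subn0 !Qz_B0.
  rewrite (cnt_g2 mu k (_ : b1 < a1.+1)) //.
  case: (leqP m b1) => hmb.
    rewrite (IH h12) //; try lia.
    have -> : (a1.+1 - m = (a1 - m).+1)%N by lia.
    have -> : (b1.+1 - m = (b1 - m).+1)%N by lia.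
    exact: Qz_pascal.
  rewrite N0' // addr0.
  have -> : (b1.+1 - m = 0)%N by lia.
  by rewrite !Qz_B0.
have eb : b = a1.+1 by lia.
subst b.
rewrite (cnt_g1_lt mu k hba) (cnt_g2 mu k (ltnSn a1)).
have hma : m <= a1 by lia.
have -> : (a1.+1 - m = (a1 - m).+1)%N by lia.
rewrite -Qz_diag.
case: k => [|k1].
  rewrite add0n (IH h12) //; try lia.
  by rewrite addr0 (_ : (a1.+1 - m = (a1 - m).+1)%N) //; lia.
rewrite Nsym /= PoszD !(IH h12) //; try lia.
rewrite (_ : (a1.+1 - m = (a1 - m).+1)%N); last by lia.
by rewrite addrC.
Qed.


Lemma S_card_eq mu k a b : all12 mu -> S_card k a b mu = N mu a b k true.
Proof.
move=> h12; rewrite /S_card cardE.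
set A := [set t | _].
pose f (t : (a.-tuple 'I_(size mu).+1) * (b.-tuple 'I_(size mu).+1)) :=
  (map val t.1, map val t.2).
have finj : injective f.
  move=> [t1 t2] [s1 s2] [] /(inj_map val_inj) e1 /(inj_map val_inj) e2.
  by congr pair; apply: val_inj.
rewrite -(size_map f) /N -size_filter; apply: perm_size; apply: uniq_perm.
- by rewrite map_inj_uniq ?enum_uniq.
- by rewrite filter_uniq ?fills_uniq.
move=> [u v]; rewrite mem_filter; apply/mapP/andP.
  move=> [t]; rewrite mem_enum inE => /and3P [/and3P [ha hb hc] /andP [s1 s2] hk].
  rewrite /f => -[-> ->]; split.
    by rewrite /Pr /= ha hb -num_invE hk.
  by apply/fillsP => //; split=> //; apply/has_contentP.
move=> [/and3P [/= ha hb hk] hin].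
have [b1 b2 _ _ _] := fills_inv hin.
have hu : size (map (@inord (size mu)) u) == a by rewrite size_map.
have hv : size (map (@inord (size mu)) v) == b by rewrite size_map.
have ku : map val (map (@inord (size mu)) u) = u.
  rewrite -map_comp -[RHS]map_id; apply/eq_in_map => x hx /=.
  by rewrite inordK // ltnS (allP b1 _ hx).
have kv : map val (map (@inord (size mu)) v) = v.
  rewrite -map_comp -[RHS]map_id; apply/eq_in_map => x hx /=.
  by rewrite inordK // ltnS (allP b2 _ hx).
exists (Tuple hu, Tuple hv); last by rewrite /f /= ku kv.
rewrite mem_enum inE /in_S /is_filling /= ku kv.
rewrite ha hb num_invE hk.
have /fillsP [] // := hin => s1 s2 hc.
by move/has_contentP: hc => ->; rewrite /row_standard s1 s2 ?eqxx.
Qed.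

Import GRing.Theory Num.Theory.

Lemma sumn12 mu : all12 mu -> sumn mu = size mu + count (pred1 2) mu.
Proof.
elim: mu => [|x mu IH] //= /andP [hx h]; rewrite IH //.
have [->|->] : x = 1 \/ x = 2 by move: hx; case: (x =P 1); case: (x =P 2); auto.
  by rewrite /=; lia.
by rewrite /=; lia.
Qed.

Unset Implicit Arguments.
Theorem mainTheorem15 (a b m : nat) (mu : seq nat) (k : nat) :
  b <= a -> 1 <= b ->
  sumn mu = a + b ->
  all (fun x => (x == 1) || (x == 2)) mu ->
  count (pred1 2) mu = m ->
  ((S_card k a b mu)%:R : rat) =
    if k + m <= b then
       (((a - b + 1 + 2 * k)%:R / (a + 1 + k - m)%:R) *
         ('C(a + b - 2 * m, b - k - m))%:R)%R
     else 0%R.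
Proof.
move=> hab hb1 hsum h12 hm.
have hs : a + b = size mu + count (pred1 2) mu by rewrite -hsum sumn12.
rewrite S_card_eq //.
case: (leqP (count (pred1 2) mu) b) => hmb; last first.
  rewrite N0 // ifF //; lia.
have := Nmain h12 k hab hs hmb; rewrite hm => hN.
rewrite hm in hmb hs.
have -> : ((N mu a b k true)%:R : rat) = ((Posz (N mu a b k true))%:~R)%R by [].
rewrite hN /Qz.
case: (leqP (k + m) b) => hkb; last first.
  rewrite !bzN ?subrr //; lia.
set n := (a - m + (b - m))%N.
have -> : ((b - m)%:Z - k%:Z)%R = Posz (b - k - m) by lia.
have -> : (a + b - 2 * m = n)%N by rewrite /n; lia.
case ep : (b - k - m)%N => [|p1].
  have -> : (Posz 0 - 1)%R = Negz 0 by [].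
  rewrite /= bin0 subr0.
  have -> : (a - b + 1 + 2 * k = a + 1 + k - m)%N by lia.
  rewrite divff ?mul1r //.
  rewrite pnatr_eq0; lia.
have -> : (Posz p1.+1 - 1)%R = Posz p1 by lia.
rewrite /= intrB.
set Y := (a + 1 + k - m)%N.
have hY : Y = (n - p1)%N by rewrite /Y /n; lia.
have key := mul_bin_left n p1; rewrite -hY in key.
have key' : (p1.+1%:R * ('C(n, p1.+1))%:R : rat)%R = (Y%:R * ('C(n, p1))%:R)%R.
  by rewrite -!natrM key.
have Y0 : (Y%:R : rat) != 0%R by rewrite pnatr_eq0 /Y; lia.
have hX : ((a - b + 1 + 2 * k)%:R : rat) = (Y%:R - p1.+1%:R)%R.
  by rewrite -natrB /Y; [congr (GRing.natmul _ _); lia | lia].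
have e1 : (('C(n, p1))%:R : rat) = (p1.+1%:R * ('C(n, p1.+1))%:R / Y%:R)%R.
  by rewrite key' [(Y%:R * _)%R]mulrC mulfK.
rewrite -!pmulrn.
rewrite e1 hX.
by field.
Qed.
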